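(* Let $d\ge2$, let $g=\sum_{\mathbf k}g_{\mathbf k}u^{\mathbf k}\in R_d$ satisfy conditions (A)–(D) below, and let $s\ge d-2$ be an integer. Define $\omega\in\mathbb R^{\mathbb Z^d}$ by $\omega_{\mathbf 0}=0$ and $\omega_{\mathbf n}=\|\mathbf n\|^{-s}$ for $\mathbf n\ne\mathbf 0$, where $\|\cdot\|$ is the Euclidean norm. Then $g\cdot\omega\in\ell^1(\mathbb Z^d)$, where $(g\cdot\omega)_{\mathbf n}=\sum_{\mathbf k}g_{\mathbf k}\omega_{\mathbf n-\mathbf k}$. Conditions: (A) $\sum_{\mathbf k}g_{\mathbf k}=0$; (B) $\sum_{\mathbf k}g_{\mathbf k}k_i=0$ for all $i$; (C) $\sum_{\mathbf k}g_{\mathbf k}k_ik_j=0$ for all $i\ne j$; (D) $\sum_{\mathbf k}g_{\mathbf k}(k_i^2-k_j^2)=0$ for all $i\ne j$.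
   Context: $R_d=\mathbb Z[u_1^{\pm1},\dots,u_d^{\pm1}]$ with $u^{\mathbf k}=u_1^{k_1}\cdots u_d^{k_d}$; Laurent polynomials are identified with their finitely supported coefficient sequences on $\mathbb Z^d$. *)

(* Defs.v *)
From Stdlib Require Import Reals ZArith List.
Import ListNotations.

(* A point of Z^d is a list of d integers. *)
Definition pt := list Z.

Definition coord (k : pt) (i : nat) : Z := nth i k 0%Z.

Definition vsub (n k : pt) : pt :=
  map (fun p => (fst p - snd p)%Z) (combine n k).

Definition normsq (n : pt) : R :=
  fold_right (fun x acc => (IZR x * IZR x + acc)%R) 0%R n.
Definition eucl_norm (n : pt) : R := sqrt (normsq n).

Definition is_zero_pt (n : pt) : bool := forallb (fun x => Z.eqb x 0) n.

Definition omega (s : Z) (n : pt) : R :=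
  if is_zero_pt n then 0%R else powerRZ (eucl_norm n) (- s).

(* A Laurent polynomial in R_d is a coefficient function g : Z^d -> Z
   with finite support; S is a duplicate-free list of points of Z^d
   containing the support of g. *)
Definition is_support (d : nat) (g : pt -> Z) (S : list pt) : Prop :=
  NoDup S /\ Forall (fun k => length k = d) S /\
  (forall k, g k <> 0%Z -> In k S).

Definition zsumS (S : list pt) (f : pt -> Z) : Z :=
  fold_right (fun k acc => (f k + acc)%Z) 0%Z S.

Definition condA (g : pt -> Z) (S : list pt) : Prop := zsumS S g = 0%Z.
Definition condB (d : nat) (g : pt -> Z) (S : list pt) : Prop :=
  forall i, (i < d)%nat -> zsumS S (fun k => g k * coord k i)%Z = 0%Z.
Definition condC (d : nat) (g : pt -> Z) (S : list pt) : Prop :=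
  forall i j, (i < d)%nat -> (j < d)%nat -> i <> j ->
    zsumS S (fun k => g k * coord k i * coord k j)%Z = 0%Z.
Definition condD (d : nat) (g : pt -> Z) (S : list pt) : Prop :=
  forall i j, (i < d)%nat -> (j < d)%nat -> i <> j ->
    zsumS S (fun k => g k * (coord k i ^ 2 - coord k j ^ 2))%Z = 0%Z.

Definition conv (g : pt -> Z) (S : list pt) (s : Z) (n : pt) : R :=
  fold_right (fun k acc => (IZR (g k) * omega s (vsub n k) + acc)%R) 0%R S.

Definition ell1 (d : nat) (f : pt -> R) : Prop :=
  exists M : R, forall L : list pt,
    NoDup L -> Forall (fun n => length n = d) L ->
    (fold_right (fun n acc => Rabs (f n) + acc) 0 L <= M)%R.

(* Main.v *)
Require Import Defs.
From Stdlib Require Import Reals Lra Lia Psatz ZArith List.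
Import ListNotations.
Open Scope R_scope.

Definition P (e t : R) := Rpower (1 + t) e.

Lemma dP e t : -1 < t -> derivable_pt_lim (P e) t (e * P (e - 1) t).
Proof.
  intro Ht.
  assert (H1 : derivable_pt_lim (fun t => 1 + t) t 1).
  { apply (derivable_pt_lim_ext (fct_cte 1 + id)%F).
    - intro z; reflexivity.
    - replace 1 with (0 + 1) at 2 by ring.
      apply derivable_pt_lim_plus; [apply derivable_pt_lim_const|apply derivable_pt_lim_id]. }
  assert (H2 := derivable_pt_lim_power (1 + t) e ltac:(lra)).
  assert (H3 := derivable_pt_lim_comp _ _ _ _ _ H1 H2).
  unfold P. apply (derivable_pt_lim_ext _ _ _ _ (fun z => eq_refl)) in H3.
  replace (e * Rpower (1 + t) (e - 1)) with (e * Rpower (1 + t) (e - 1) * 1) by ring.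
  exact H3.
Qed.

Lemma dlin f f' x a b c e : derivable_pt_lim f x f' ->
  derivable_pt_lim (fun t => a * f t + b + c * t + e * (t * t)) x (a * f' + c + e * (2 * x)).
Proof.
  intro H.
  apply (derivable_pt_lim_ext
     (mult_real_fct a f + fct_cte b + mult_real_fct c id + mult_real_fct e (id * id))%F).
  { intro z; reflexivity. }
  replace (a * f' + c + e * (2 * x)) with
    (a * f' + 0 + c * 1 + e * (1 * id x + id x * 1)) by (unfold id; ring).
  repeat apply derivable_pt_lim_plus.
  - apply derivable_pt_lim_scal; exact H.
  - apply derivable_pt_lim_const.
  - apply derivable_pt_lim_scal; apply derivable_pt_lim_id.
  - apply derivable_pt_lim_scal; apply derivable_pt_lim_mult; apply derivable_pt_lim_id.
Qed.

Lemma dlim_eq f x l l' : derivable_pt_lim f x l -> l = l' -> derivable_pt_lim f x l'.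
Proof. intros H ->; exact H. Qed.

Lemma boot (h h' : R -> R) (K : R) (m : nat) :
  0 <= K ->
  (forall t, -1/2 <= t <= 1/2 -> derivable_pt_lim h t (h' t)) -> h 0 = 0 ->
  (forall t, -1/2 <= t <= 1/2 -> Rabs (h' t) <= K * Rabs t ^ m) ->
  forall t, -1/2 <= t <= 1/2 -> Rabs (h t) <= K * Rabs t ^ (S m).
Proof.
  intros HK Hd H0 Hb t Ht.
  destruct (Rtotal_order t 0) as [Hlt|[Heq|Hgt]].
  - destruct (MVT_cor2 h h' t 0 Hlt) as [c [Hc1 Hc2]].
    { intros c Hc; apply Hd; lra. }
    rewrite H0 in Hc1.
    assert (Hht : h t = h' c * t) by lra.
    rewrite Hht, Rabs_mult. simpl.
    assert (Hbc := Hb c ltac:(lra)).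
    assert (Rabs c ^ m <= Rabs t ^ m).
    { apply pow_incr. split; [apply Rabs_pos|]. rewrite !Rabs_left by lra. lra. }
    assert (0 <= Rabs t) by apply Rabs_pos.
    assert (0 <= Rabs (h' c)) by apply Rabs_pos.
    assert (Rabs (h' c) <= K * Rabs t ^ m).
    { eapply Rle_trans; [exact Hbc|]. apply Rmult_le_compat_l; auto. }
    nra.
  - subst. rewrite H0, Rabs_R0. simpl. nra.
  - destruct (MVT_cor2 h h' 0 t Hgt) as [c [Hc1 Hc2]].
    { intros c Hc; apply Hd; lra. }
    rewrite H0 in Hc1.
    assert (Hht : h t = h' c * t) by lra.
    rewrite Hht, Rabs_mult. simpl.
    assert (Hbc := Hb c ltac:(lra)).
    assert (Rabs c ^ m <= Rabs t ^ m).
    { apply pow_incr. split; [apply Rabs_pos|]. rewrite !Rabs_right by lra. lra. }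
    assert (0 <= Rabs t) by apply Rabs_pos.
    assert (0 <= Rabs (h' c)) by apply Rabs_pos.
    assert (Rabs (h' c) <= K * Rabs t ^ m).
    { eapply Rle_trans; [exact Hbc|]. apply Rmult_le_compat_l; auto. }
    nra.
Qed.

Lemma Rpower_le_neg x e : 1/2 <= x -> e <= 0 -> Rpower x e <= Rpower (1/2) e.
Proof.
  intros Hx He. unfold Rpower.
  destruct (Req_dec x (1/2)) as [->|Hn]; [lra|].
  assert (ln (1/2) < ln x) by (apply ln_increasing; lra).
  destruct (Req_dec e 0) as [->|He0]; [rewrite !Rmult_0_l; lra|].
  left; apply exp_increasing. nra.
Qed.

Lemma taylor (a : R) : a <= 0 ->
  exists K, 0 <= K /\ forall t, -1/2 <= t <= 1/2 ->
    Rabs (P a t - 1 - a * t - a * (a - 1) / 2 * (t * t)) <= K * Rabs t ^ 3.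
Proof.
  intro Ha.
  set (b := a * (a - 1) / 2).
  set (K := Rabs (a * (a - 1) * (a - 2)) * Rpower (1/2) (a - 3)).
  assert (HK : 0 <= K).
  { unfold K. apply Rmult_le_pos; [apply Rabs_pos|]. unfold Rpower; left; apply exp_pos. }
  exists K; split; [exact HK|].
  set (G2 := fun t => a * (a - 1) * P (a - 2) t + (- 2 * b) + 0 * t + 0 * (t * t)).
  set (G1 := fun t => a * P (a - 1) t + (- a) + (- 2 * b) * t + 0 * (t * t)).
  set (G0 := fun t => 1 * P a t + (-1) + (- a) * t + (- b) * (t * t)).
  assert (P0 : forall e, P e 0 = 1).
  { intro e; unfold P. rewrite Rplus_0_r. unfold Rpower. rewrite ln_1, Rmult_0_r. apply exp_0. }
  assert (HG2 : forall t, -1/2 <= t <= 1/2 -> Rabs (a * (a - 1) * (a - 2) * P (a - 3) t) <= K * Rabs t ^ 0).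
  { intros t Ht. simpl. rewrite Rmult_1_r. unfold K. rewrite Rabs_mult.
    apply Rmult_le_compat_l; [apply Rabs_pos|].
    unfold P. rewrite Rabs_right by (unfold Rpower; left; apply exp_pos).
    apply Rpower_le_neg; lra. }
  assert (B2 := boot G2 (fun t => a * (a - 1) * (a - 2) * P (a - 3) t) K 0 HK).
  assert (B1 := boot G1 G2 K 1 HK).
  assert (B0 := boot G0 G1 K 2 HK).
  intros t Ht.
  replace (P a t - 1 - a * t - b * (t * t)) with (G0 t) by (unfold G0; ring).
  apply B0; auto.
  - intros x Hx. unfold G0, G1.
    eapply dlim_eq; [apply (dlin (P a) (a * P (a - 1) x) x 1 (-1) (-a) (-b)); apply dP; lra|].
    unfold b; ring.
  - unfold G0; rewrite P0; ring.
  - intros x Hx. apply B1; auto.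
    + intros y Hy. unfold G1, G2.
      eapply dlim_eq; [apply (dlin (P (a-1)) ((a-1) * P (a - 1 - 1) y) y a (-a) (-2*b) 0); apply dP; lra|].
      replace (a - 1 - 1) with (a - 2) by ring. ring.
    + unfold G1; rewrite P0; ring.
    + intros y Hy. apply B2; auto.
      * intros z Hz. unfold G2.
        eapply dlim_eq; [apply (dlin (P (a-2)) ((a-2) * P (a - 2 - 1) z) z (a*(a-1)) (-2*b) 0 0); apply dP; lra|].
        replace (a - 2 - 1) with (a - 3) by ring. ring.
      * unfold G2; rewrite P0; unfold b; field.
Qed.

Fixpoint nsum (d : nat) (f : nat -> R) : R :=
  match d with
  | O => 0
  | S d' => f O + nsum d' (fun i => f (S i))
  end.

Lemma nsum_ext d : forall f h, (forall i, (i < d)%nat -> f i = h i) -> nsum d f = nsum d h.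
Proof.
  induction d; intros f h H; simpl; auto.
  rewrite H by lia. f_equal. apply IHd. intros; apply H; lia.
Qed.

Lemma nsum_plus d : forall f h, nsum d (fun i => f i + h i) = nsum d f + nsum d h.
Proof. induction d; intros; simpl; [ring|rewrite IHd; ring]. Qed.

Lemma nsum_scal d : forall f a, nsum d (fun i => a * f i) = a * nsum d f.
Proof. induction d; intros; simpl; [ring|rewrite IHd; ring]. Qed.

Lemma nsum_const d c : nsum d (fun _ => c) = INR d * c.
Proof. induction d; simpl nsum; [simpl; ring|rewrite IHd, S_INR; ring]. Qed.

Lemma nsum_delta d : forall i f, (i < d)%nat ->
  nsum d (fun j => if Nat.eqb i j then f j else 0) = f i.
Proof.
  induction d; intros i f Hi; [lia|]. simpl.
  destruct i as [|i].
  - simpl. rewrite nsum_const. ring.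
  - simpl. rewrite (IHd i (fun j => f (S j))) by lia. ring.
Qed.

Lemma nsum_le d : forall f h, (forall i, (i < d)%nat -> f i <= h i) -> nsum d f <= nsum d h.
Proof.
  induction d; intros f h H; simpl; [lra|].
  apply Rplus_le_compat; [apply H; lia|apply IHd; intros; apply H; lia].
Qed.

Lemma nsum_abs d : forall f, Rabs (nsum d f) <= nsum d (fun i => Rabs (f i)).
Proof.
  induction d; intros; simpl; [rewrite Rabs_R0; lra|].
  eapply Rle_trans; [apply Rabs_triang|]. specialize (IHd (fun i => f (S i))). lra.
Qed.

Lemma nsum_nonneg d : forall f, (forall i, (i < d)%nat -> 0 <= f i) -> 0 <= nsum d f.
Proof.
  induction d; intros f H; simpl; [lra|].
  apply Rplus_le_le_0_compat; [apply H; lia|apply IHd; intros; apply H; lia].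
Qed.

Lemma nsum_mul d f h : nsum d f * nsum d h = nsum d (fun i => nsum d (fun j => f i * h j)).
Proof.
  rewrite Rmult_comm, <- (nsum_scal d f (nsum d h)). apply nsum_ext. intros i _. rewrite Rmult_comm.
  rewrite <- (nsum_scal d h (f i)). apply nsum_ext. intros; ring.
Qed.

Definition rsum {A : Type} (L : list A) (f : A -> R) : R :=
  fold_right (fun k acc => f k + acc) 0 L.

Lemma rsum_plus {A} (l : list A) f h : rsum l (fun x => f x + h x) = rsum l f + rsum l h.
Proof. induction l; simpl; [ring|rewrite IHl; ring]. Qed.

Lemma rsum_scal {A} (l : list A) f a : rsum l (fun x => a * f x) = a * rsum l f.
Proof. induction l; simpl; [ring|rewrite IHl; ring]. Qed.

Lemma rsum_ext {A} (l : list A) f h : (forall x, In x l -> f x = h x) -> rsum l f = rsum l h.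
Proof.
  induction l; simpl; intros H; [auto|].
  rewrite H by auto; rewrite IHl; auto.
Qed.

Lemma rsum_nsum {A} (l : list A) d F :
  rsum l (fun k => nsum d (F k)) = nsum d (fun i => rsum l (fun k => F k i)).
Proof.
  revert F; induction d; intros F; simpl.
  - induction l; simpl; [ring|rewrite IHl; ring].
  - rewrite rsum_plus. f_equal. apply (IHd (fun k i => F k (S i))).
Qed.

Lemma normsq_nsum n : normsq n = nsum (length n) (fun i => IZR (coord n i) * IZR (coord n i)).
Proof. induction n; simpl; [auto|]. rewrite IHn. reflexivity. Qed.

Lemma coord_vsub n k i : length n = length k ->
  coord (vsub n k) i = (coord n i - coord k i)%Z.
Proof.
  revert k i; induction n as [|x n IH]; intros [|y k] i H; simpl in H; try lia.
  - unfold coord; simpl. destruct i; reflexivity.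
  - destruct i; [reflexivity|]. unfold coord, vsub in *. simpl. apply IH. lia.
Qed.

Lemma length_vsub n k : length n = length k -> length (vsub n k) = length n.
Proof. intro H. unfold vsub. rewrite length_map, length_combine. lia. Qed.

Lemma coord_sq_le n : forall i, IZR (coord n i) * IZR (coord n i) <= normsq n.
Proof.
  induction n as [|x n IH]; intros i; unfold coord; simpl.
  - destruct i; simpl; lra.
  - destruct i; simpl.
    + assert (0 <= normsq n).
      { rewrite normsq_nsum. apply nsum_nonneg. intros; nra. } lra.
    + specialize (IH i). unfold coord in IH. nra.
Qed.

Lemma normsq_nonneg n : 0 <= normsq n.
Proof. rewrite normsq_nsum. apply nsum_nonneg. intros; nra. Qed.

Lemma normsq_zero v : is_zero_pt v = true -> normsq v = 0.
Proof.
  induction v; simpl; auto. intro H. apply andb_prop in H as [H1 H2].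
  apply Z.eqb_eq in H1; subst. rewrite IHv by auto. simpl; ring.
Qed.

Lemma normsq_ge1 v : is_zero_pt v = false -> 1 <= normsq v.
Proof.
  induction v; simpl; [discriminate|]. intro H.
  assert (0 <= normsq v) by apply normsq_nonneg.
  destruct (Z.eqb a 0) eqn:E.
  - simpl in H. specialize (IHv H). nra.
  - apply Z.eqb_neq in E.
    assert (1 <= IZR a * IZR a).
    { destruct (Z_lt_le_dec a 0).
      - assert (IZR a <= -1) by (apply IZR_le; lia). nra.
      - assert (1 <= IZR a) by (apply IZR_le; lia). nra. }
    lra.
Qed.

Lemma IZR_zsumS S f : IZR (zsumS S f) = rsum S (fun k => IZR (f k)).
Proof. induction S; simpl; [auto|]. rewrite plus_IZR, IHS. reflexivity. Qed.

Definition n1 (n : pt) : R := fold_right (fun x acc => Rabs (IZR x) + acc) 0 n.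

Lemma n1_nsum n : n1 n = nsum (length n) (fun i => Rabs (IZR (coord n i))).
Proof. induction n; simpl; [auto|]. rewrite IHn. reflexivity. Qed.

Lemma coord_le_rho n i : Rabs (IZR (coord n i)) <= sqrt (normsq n).
Proof.
  rewrite <- sqrt_Rsqr_abs. apply sqrt_le_1_alt. unfold Rsqr. apply coord_sq_le.
Qed.

Definition dot (d : nat) (n k : pt) : R := nsum d (fun i => IZR (coord n i) * IZR (coord k i)).

Lemma rsum_lin2 {A} (l : list A) f h a b :
  rsum l (fun x => a * f x + b * h x) = a * rsum l f + b * rsum l h.
Proof. rewrite rsum_plus, !rsum_scal. reflexivity. Qed.

Section M.
End M.

Lemma moments d g S : is_support d g S -> (1 <= d)%nat ->
  condA g S -> condB d g S -> condC d g S -> condD d g S ->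
  forall n, length n = d ->
  rsum S (fun k => IZR (g k)) = 0 /\
  rsum S (fun k => IZR (g k) * dot d n k) = 0 /\
  rsum S (fun k => IZR (g k) * normsq k) =
     INR d * rsum S (fun k => IZR (g k) * IZR (coord k 0) * IZR (coord k 0)) /\
  rsum S (fun k => IZR (g k) * (dot d n k * dot d n k)) =
     rsum S (fun k => IZR (g k) * IZR (coord k 0) * IZR (coord k 0)) * normsq n.
Proof.
  intros [HN [HL Hsup]] Hd HA HB HC HD n Hn.
  set (c := rsum S (fun k => IZR (g k) * IZR (coord k 0) * IZR (coord k 0))).
  assert (HB' : forall i, (i < d)%nat -> rsum S (fun k => IZR (g k) * IZR (coord k i)) = 0).
  { intros i Hi. assert (H := f_equal IZR (HB i Hi)). rewrite IZR_zsumS in H.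
    etransitivity; [|exact H]. apply rsum_ext; intros; rewrite mult_IZR; reflexivity. }
  assert (Hcij : forall i j, (i < d)%nat -> (j < d)%nat ->
     rsum S (fun k => IZR (g k) * IZR (coord k i) * IZR (coord k j)) = if Nat.eqb i j then c else 0).
  { intros i j Hi Hj. destruct (Nat.eqb i j) eqn:E.
    - apply Nat.eqb_eq in E; subst j.
      destruct (Nat.eq_dec i 0) as [->|Hi0]; [reflexivity|].
      assert (H := HD i 0%nat Hi Hd Hi0).
      apply (f_equal IZR) in H. rewrite IZR_zsumS in H.
      rewrite (rsum_ext _ _ (fun k => 1 * (IZR (g k) * IZR (coord k i) * IZR (coord k i)) +
                                   (-1) * (IZR (g k) * IZR (coord k 0) * IZR (coord k 0)))) in H.
      2:{ intros k _. rewrite mult_IZR, minus_IZR, !Z.pow_2_r, !mult_IZR. ring. }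
      rewrite rsum_lin2 in H. unfold c. lra.
    - apply Nat.eqb_neq in E.
      assert (H := HC i j Hi Hj E).
      apply (f_equal IZR) in H. rewrite IZR_zsumS in H. etransitivity; [|exact H].
      apply rsum_ext; intros; rewrite !mult_IZR; reflexivity. }
  split; [|split; [|split]].
  - rewrite <- IZR_zsumS, HA. reflexivity.
  - unfold dot.
    rewrite (rsum_ext _ _ (fun k => nsum d (fun i => IZR (coord n i) * (IZR (g k) * IZR (coord k i))))).
    2:{ intros k _. rewrite <- nsum_scal. apply nsum_ext; intros; ring. }
    rewrite rsum_nsum. rewrite <- (Rmult_0_r (INR d)), <- nsum_const.
    apply nsum_ext. intros i Hi. rewrite rsum_scal, HB' by auto. ring.
  - rewrite (rsum_ext _ _ (fun k => nsum d (fun i => IZR (g k) * IZR (coord k i) * IZR (coord k i)))).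
    2:{ intros k Hk. rewrite normsq_nsum.
        rewrite Forall_forall in HL. rewrite (HL k Hk).
        rewrite <- nsum_scal. apply nsum_ext; intros; ring. }
    rewrite rsum_nsum, <- nsum_const. apply nsum_ext. intros i Hi.
    rewrite Hcij by auto. rewrite Nat.eqb_refl. reflexivity.
  - unfold dot.
    rewrite (rsum_ext _ _ (fun k => nsum d (fun i => nsum d (fun j =>
        IZR (coord n i) * IZR (coord n j) * (IZR (g k) * IZR (coord k i) * IZR (coord k j)))))).
    2:{ intros k _. rewrite nsum_mul, <- nsum_scal. apply nsum_ext; intros i _.
        rewrite <- nsum_scal. apply nsum_ext; intros; ring. }
    rewrite rsum_nsum.
    rewrite normsq_nsum, Hn, <- nsum_scal.
    apply nsum_ext; intros i Hi.
    rewrite rsum_nsum.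
    rewrite (nsum_ext d _ (fun j => if Nat.eqb i j then IZR (coord n i) * IZR (coord n j) * c else 0)).
    + rewrite nsum_delta by auto. ring.
    + intros j Hj. rewrite rsum_scal, Hcij by auto. destruct (Nat.eqb i j); ring.
Qed.

Lemma omega_pos s v : 0 < normsq v -> omega s v = Rpower (normsq v) (/ 2 * IZR (- s)).
Proof.
  intro H. unfold omega.
  destruct (is_zero_pt v) eqn:E.
  - rewrite normsq_zero in H by auto. lra.
  - unfold eucl_norm. rewrite powerRZ_Rpower by (apply sqrt_lt_R0; auto).
    rewrite <- Rpower_sqrt by auto. rewrite Rpower_mult. reflexivity.
Qed.

Lemma Rpower_rho r s : 0 < r -> (0 <= s)%Z ->
  Rpower r (/ 2 * IZR (- s)) = / (sqrt r) ^ (Z.to_nat s).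
Proof.
  intros Hr Hs. rewrite <- Rpower_mult, Rpower_sqrt by auto.
  rewrite <- (Z2Nat.id s) at 1 by auto.
  rewrite opp_IZR, <- INR_IZR_INZ, Rpower_Ropp, Rpower_pow by (apply sqrt_lt_R0; auto).
  reflexivity.
Qed.

Lemma omega_bounds s v : (0 <= s)%Z -> 0 <= omega s v <= 1.
Proof.
  intro Hs. unfold omega. destruct (is_zero_pt v) eqn:E; [lra|].
  assert (H1 := normsq_ge1 v E).
  unfold eucl_norm. rewrite powerRZ_Rpower by (apply sqrt_lt_R0; lra).
  rewrite <- Rpower_sqrt by lra. rewrite Rpower_mult.
  rewrite Rpower_rho by (auto || lra).
  assert (1 <= sqrt (normsq v)) by (rewrite <- sqrt_1; apply sqrt_le_1_alt; lra).
  assert (1 <= sqrt (normsq v) ^ Z.to_nat s) by (apply pow_R1_Rle; lra).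
  split.
  - left; apply Rinv_0_lt_compat; lra.
  - rewrite <- Rinv_1. apply Rinv_le_contravar; lra.
Qed.

Lemma rsum_lin4 {A} (l : list A) f h u v a b :
  rsum l (fun x => f x + a * h x + b * u x + v x) = rsum l f + a * rsum l h + b * rsum l u + rsum l v.
Proof. rewrite !rsum_plus, !rsum_scal. reflexivity. Qed.

Lemma rsum_le {A} (l : list A) f h : (forall x, In x l -> f x <= h x) -> rsum l f <= rsum l h.
Proof.
  induction l; simpl; intros H; [lra|].
  apply Rplus_le_compat; [apply H; auto|apply IHl; intros; apply H; auto].
Qed.

Lemma rsum_nonneg {A} (l : list A) f : (forall x, In x l -> 0 <= f x) -> 0 <= rsum l f.
Proof.
  induction l; simpl; intros H; [lra|].
  apply Rplus_le_le_0_compat; [apply H; auto|apply IHl; intros; apply H; auto].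
Qed.

Lemma rsum_abs {A} (l : list A) f : Rabs (rsum l f) <= rsum l (fun x => Rabs (f x)).
Proof.
  induction l; simpl; [rewrite Rabs_R0; lra|].
  eapply Rle_trans; [apply Rabs_triang|lra].
Qed.

Lemma rsum_in_le {A} (l : list A) f x : (forall y, In y l -> 0 <= f y) -> In x l -> f x <= rsum l f.
Proof.
  induction l; simpl; intros H Hx; [contradiction|].
  destruct Hx as [->|Hx].
  - assert (0 <= rsum l f) by (apply rsum_nonneg; auto). lra.
  - assert (f x <= rsum l f) by (apply IHl; auto). assert (0 <= f a) by auto. lra.
Qed.

Lemma inv_pow_le (x : R) (m m' : nat) : 1 <= x -> (m' <= m)%nat -> / x ^ m <= / x ^ m'.
Proof.
  intros Hx Hm. apply Rinv_le_contravar; [apply pow_lt; lra|]. apply Rle_pow; auto.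
Qed.

Lemma normsq_vsub d n k : length n = d -> length k = d ->
  normsq (vsub n k) = normsq n + (-2 * dot d n k + normsq k).
Proof.
  intros Hn Hk.
  rewrite (normsq_nsum (vsub n k)), length_vsub, Hn by lia.
  rewrite (normsq_nsum n), (normsq_nsum k), Hn, Hk. unfold dot.
  rewrite <- nsum_scal, <- !nsum_plus. apply nsum_ext. intros i _.
  rewrite coord_vsub by lia. rewrite minus_IZR. ring.
Qed.

Lemma dot_le d n k : Rabs (dot d n k) <= sqrt (normsq n) * nsum d (fun i => Rabs (IZR (coord k i))).
Proof.
  unfold dot. eapply Rle_trans; [apply nsum_abs|].
  rewrite <- nsum_scal. apply nsum_le. intros i _. rewrite Rabs_mult.
  apply Rmult_le_compat_r; [apply Rabs_pos|apply coord_le_rho].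
Qed.

Lemma n1_le d n : length n = d -> n1 n <= INR d * sqrt (normsq n).
Proof.
  intro Hn. rewrite n1_nsum, Hn, <- nsum_const. apply nsum_le. intros; apply coord_le_rho.
Qed.

Lemma Rabs_le_between x a : Rabs x <= a -> -a <= x <= a.
Proof. unfold Rabs; destruct Rcase_abs; intros; lra. Qed.

Lemma main_est d g Sp s : (2 <= d)%nat -> is_support d g Sp ->
  condA g Sp -> condB d g Sp -> condC d g Sp -> condD d g Sp ->
  (Z.of_nat d - 2 <= s)%Z ->
  exists K, 0 <= K /\ forall n, length n = d ->
    Rabs (conv g Sp s n) <= K * / (1 + n1 n) ^ (S d).
Proof.
  intros Hd Hsup HA HB HC HD Hs.
  assert (Hs0 : (0 <= s)%Z) by lia.
  set (sn := Z.to_nat s).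
  assert (Hsn : s = Z.of_nat sn) by (unfold sn; rewrite Z2Nat.id; auto).
  set (al := / 2 * IZR (- s)).
  assert (Hal : al = - INR sn / 2).
  { unfold al. rewrite Hsn, opp_IZR, <- INR_IZR_INZ. field. }
  assert (Hal0 : al <= 0) by (rewrite Hal; pose proof (pos_INR sn); lra).
  destruct (taylor al Hal0) as [K3 [HK3 HT]].
  set (be := al * (al - 1) / 2).
  set (gk := fun k => IZR (g k)).
  set (Qk := fun k => normsq k).
  set (N1k := fun k => nsum d (fun i => Rabs (IZR (coord k i)))).
  set (ak := fun k => 2 * N1k k + Qk k).
  set (G := rsum Sp (fun k => Rabs (gk k))).
  set (rho0 := 1 + 2 * rsum Sp ak).
  set (c := rsum Sp (fun k => IZR (g k) * IZR (coord k 0) * IZR (coord k 0))).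
  set (X := Rabs ((al * INR d + 4 * be) * c)).
  set (E0 := rsum Sp (fun k => Rabs (gk k) * (4 * N1k k * Qk k + Qk k * Qk k))).
  set (T0 := rsum Sp (fun k => Rabs (gk k) * (K3 * ak k ^ 3))).
  set (Zc := X + Rabs be * E0 + T0).
  assert (HN1k : forall k, 0 <= N1k k).
  { intro k. apply nsum_nonneg. intros; apply Rabs_pos. }
  assert (Hak : forall k, 0 <= ak k).
  { intro k. unfold ak, Qk. pose proof (HN1k k). pose proof (normsq_nonneg k). lra. }
  assert (HG : 0 <= G) by (apply rsum_nonneg; intros; apply Rabs_pos).
  assert (Hrho0 : 1 <= rho0).
  { unfold rho0. assert (0 <= rsum Sp ak) by (apply rsum_nonneg; auto). lra. }
  assert (HE0 : 0 <= E0).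
  { apply rsum_nonneg; intros. apply Rmult_le_pos; [apply Rabs_pos|].
    pose proof (HN1k x). assert (0 <= Qk x) by apply normsq_nonneg. nra. }
  assert (HT0 : 0 <= T0).
  { apply rsum_nonneg; intros. apply Rmult_le_pos; [apply Rabs_pos|].
    apply Rmult_le_pos; auto. apply pow_le; auto. }
  assert (HZc : 0 <= Zc).
  { unfold Zc, X. pose proof (Rabs_pos ((al * INR d + 4 * be) * c)).
    pose proof (Rabs_pos be). nra. }
  assert (Hd1 : 0 <= INR d) by apply pos_INR.
  exists (G * (1 + INR d * rho0) ^ (S d) + Zc * (1 + INR d) ^ (S d)).
  split.
  { apply Rplus_le_le_0_compat; apply Rmult_le_pos; auto; apply pow_le; nra. }
  intros n Hn.
  assert (Hconv : conv g Sp s n = rsum Sp (fun k => gk k * omega s (vsub n k))) by reflexivity.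
  set (r := normsq n).
  set (rho := sqrt r).
  assert (Hn1 : n1 n <= INR d * rho) by (apply n1_le; auto).
  assert (Hn1p : 0 <= n1 n).
  { rewrite n1_nsum. apply nsum_nonneg. intros; apply Rabs_pos. }
  assert (Hpos : 0 < / (1 + n1 n) ^ (S d)) by (apply Rinv_0_lt_compat, pow_lt; lra).
  destruct (Rlt_le_dec rho rho0) as [Hsmall|Hbig].
  -
    assert (Hc1 : Rabs (conv g Sp s n) <= G).
    { rewrite Hconv. eapply Rle_trans; [apply rsum_abs|]. apply rsum_le. intros k _.
      rewrite Rabs_mult. destruct (omega_bounds s (vsub n k) Hs0).
      rewrite (Rabs_right (omega _ _)) by lra.
      pose proof (Rabs_pos (gk k)). nra. }
    assert (Hle : (1 + n1 n) ^ (S d) <= (1 + INR d * rho0) ^ (S d)).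
    { apply pow_incr. split; [lra|]. nra. }
    assert (G <= G * (1 + INR d * rho0) ^ (S d) * / (1 + n1 n) ^ (S d)).
    { assert (0 < (1 + n1 n) ^ (S d)) by (apply pow_lt; lra).
      rewrite Rmult_assoc. rewrite <- (Rmult_1_r G) at 1.
      apply Rmult_le_compat_l; auto.
      apply (Rmult_le_reg_r ((1 + n1 n) ^ (S d))); auto.
      rewrite Rmult_assoc, Rinv_l, Rmult_1_l, Rmult_1_r by lra. lra. }
    assert (0 <= Zc * (1 + INR d) ^ (S d) * / (1 + n1 n) ^ (S d)).
    { apply Rmult_le_pos; [|lra]. apply Rmult_le_pos; auto. apply pow_le; lra. }
    rewrite Rmult_plus_distr_r. lra.
  -
    assert (Hbound : Rabs (conv g Sp s n) <= Zc * / rho ^ (S d)).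
    { assert (Hrho1 : 1 <= rho) by lra.
      assert (Hr : r = rho * rho) by (unfold rho; rewrite sqrt_sqrt; auto; apply normsq_nonneg).
      assert (Hr0 : 0 < r) by nra.
      destruct (moments d g Sp Hsup ltac:(lia) HA HB HC HD n Hn) as [M1 [M2 [M3 M4]]].
      fold c in M3, M4.
      change (rsum Sp gk = 0) in M1.
      change (rsum Sp (fun k => gk k * dot d n k) = 0) in M2.
      change (rsum Sp (fun k => gk k * Qk k) = INR d * c) in M3.
      fold r in M4.
      change (rsum Sp (fun k => gk k * (dot d n k * dot d n k)) = c * r) in M4.
      destruct Hsup as [_ [HL _]]. rewrite Forall_forall in HL.
      set (e := fun k => -2 * dot d n k + Qk k).
      set (t := fun k => e k / r).
      assert (He : forall k, Rabs (e k) <= rho * ak k).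
      { intro k. unfold e, ak.
        assert (H1 := dot_le d n k). fold r rho in H1. fold (N1k k) in H1.
        assert (0 <= Qk k) by apply normsq_nonneg.
        pose proof (HN1k k).
        eapply Rle_trans; [apply Rabs_triang|]. rewrite Rabs_mult.
        replace (Rabs (-2)) with 2 by (unfold Rabs; destruct Rcase_abs; lra).
        rewrite (Rabs_right (Qk k)) by lra. nra. }
      assert (Hakle : forall k, In k Sp -> ak k <= (rho0 - 1) / 2).
      { intros k Hk. assert (ak k <= rsum Sp ak) by (apply rsum_in_le; auto). unfold rho0. lra. }
      assert (Ht : forall k, In k Sp -> Rabs (t k) <= ak k / rho /\ Rabs (t k) <= 1/2).
      { intros k Hk. unfold t. unfold Rdiv. rewrite Rabs_mult, (Rabs_right (/ r)) by (left; apply Rinv_0_lt_compat; lra).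
        assert (H1 := He k). assert (H2 := Hakle k Hk). pose proof (Hak k).
        assert (Rabs (e k) * / r <= ak k * / rho).
        { rewrite Hr. apply (Rmult_le_reg_r (rho * rho)); [nra|].
          replace (Rabs (e k) * / (rho * rho) * (rho * rho)) with (Rabs (e k)) by (field; lra).
          replace (ak k * / rho * (rho * rho)) with (rho * ak k) by (field; lra). lra. }
        split; auto.
        assert (ak k * / rho <= 1/2).
        { apply (Rmult_le_reg_r rho); [lra|].
          replace (ak k * / rho * rho) with (ak k) by (field; lra). lra. }
        lra. }
      assert (Hom : forall k, In k Sp -> omega s (vsub n k) = Rpower r al * P al (t k)).
      { intros k Hk. assert (Hv := normsq_vsub d n k Hn (HL k Hk)). fold r in Hv.
        change (normsq (vsub n k) = r + e k) in Hv.
        destruct (Ht k Hk) as [_ Ht2].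
        assert (Het : r + e k = r * (1 + t k)) by (unfold t; field; lra).
        assert (Ht3 : 0 < 1 + t k) by (apply Rabs_le_between in Ht2 as [? ?]; lra).
        rewrite omega_pos by (rewrite Hv, Het; nra).
        fold al. rewrite Hv, Het, <- Rpower_mult_distr by lra. reflexivity. }
      set (Rk := fun k => P al (t k) - 1 - al * t k - be * (t k * t k)).
      assert (HRk : forall k, In k Sp -> Rabs (Rk k) <= / rho ^ 3 * (K3 * ak k ^ 3)).
      { intros k Hk. destruct (Ht k Hk) as [Ht1 Ht2].
        assert (H := HT (t k) ltac:(apply Rabs_le_between in Ht2 as [? ?]; lra)).
        eapply Rle_trans; [exact H|].
        replace (/ rho ^ 3 * (K3 * ak k ^ 3)) with (K3 * (ak k / rho) ^ 3) by (field; lra).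
        apply Rmult_le_compat_l; auto. apply pow_incr. split; [apply Rabs_pos|auto]. }
      set (W := fun k => -4 * dot d n k * Qk k + Qk k * Qk k).
      assert (Hdec : rsum Sp (fun k => gk k * P al (t k)) =
         (al * INR d + 4 * be) * c / r + be / (r * r) * rsum Sp (fun k => gk k * W k)
         + rsum Sp (fun k => gk k * Rk k)).
      { rewrite (rsum_ext _ _ (fun k => gk k + (al / r) * (-2 * (gk k * dot d n k) + 1 * (gk k * Qk k))
           + (be / (r * r)) * (4 * (gk k * (dot d n k * dot d n k)) + 1 * (gk k * W k)) + gk k * Rk k)).
        2:{ intros k _. unfold Rk, W, t, e. field. lra. }
        rewrite rsum_lin4, !rsum_lin2. rewrite M1, M2, M3, M4. field. lra. }
      assert (HW : Rabs (rsum Sp (fun k => gk k * W k)) <= rho * E0).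
      { eapply Rle_trans; [apply rsum_abs|]. unfold E0. rewrite <- rsum_scal.
        apply rsum_le. intros k Hk. rewrite Rabs_mult.
        assert (H1 := dot_le d n k). fold r rho in H1. fold (N1k k) in H1.
        assert (0 <= Qk k) by apply normsq_nonneg.
        pose proof (HN1k k). pose proof (Rabs_pos (gk k)).
        assert (Rabs (W k) <= rho * (4 * N1k k * Qk k + Qk k * Qk k)).
        { unfold W. eapply Rle_trans; [apply Rabs_triang|].
          rewrite Rabs_mult, Rabs_mult, (Rabs_right (Qk k)), (Rabs_right (Qk k * Qk k)) by nra.
          replace (Rabs (-4)) with 4 by (unfold Rabs; destruct Rcase_abs; lra). nra. }
        nra. }
      assert (HR : Rabs (rsum Sp (fun k => gk k * Rk k)) <= / rho ^ 3 * T0).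
      { eapply Rle_trans; [apply rsum_abs|]. unfold T0. rewrite <- rsum_scal.
        apply rsum_le. intros k Hk. rewrite Rabs_mult.
        pose proof (HRk k Hk). pose proof (Rabs_pos (gk k)).
        replace (/ rho ^ 3 * (Rabs (gk k) * (K3 * ak k ^ 3))) with (Rabs (gk k) * (/ rho ^ 3 * (K3 * ak k ^ 3))) by ring.
        apply Rmult_le_compat_l; auto. }
      assert (Hconv2 : conv g Sp s n = Rpower r al * rsum Sp (fun k => gk k * P al (t k))).
      { rewrite Hconv, <- rsum_scal. apply rsum_ext. intros k Hk. rewrite Hom by auto. ring. }
      assert (Hpw : Rpower r al = / rho ^ sn) by (unfold al, rho, sn; apply Rpower_rho; auto).
      rewrite Hconv2, Hdec, Hpw.
      assert (Hsnd : (d <= sn + 2)%nat) by lia.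
      assert (Hrp : forall m, 0 < rho ^ m) by (intro m; apply pow_lt; lra).
      assert (HX : X * / rho ^ (sn + 2) <= X * / rho ^ (Datatypes.S d)).
      { destruct (Nat.eq_dec (sn + 2) d) as [E|E].
        - assert (Hz : al * INR d + 4 * be = 0).
          { unfold be. rewrite <- E, plus_INR, Hal. simpl. field. }
          unfold X. rewrite Hz, Rmult_0_l, Rabs_R0. lra.
        - apply Rmult_le_compat_l; [apply Rabs_pos|]. apply inv_pow_le; [lra|lia]. }
      assert (Hrest : / rho ^ (sn + 3) <= / rho ^ (Datatypes.S d)) by (apply inv_pow_le; [lra|lia]).
      set (Wsum := rsum Sp (fun k => gk k * W k)) in *.
      set (Rsum := rsum Sp (fun k => gk k * Rk k)) in *.
      set (A := (al * INR d + 4 * be) * c) in *.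
      assert (HY : Rabs (A / r + be / (r * r) * Wsum + Rsum) <=
                   X * / rho ^ 2 + (Rabs be * E0 + T0) * / rho ^ 3).
      { eapply Rle_trans; [apply Rabs_triang|].
        eapply Rle_trans; [apply Rplus_le_compat_r, Rabs_triang|].
        assert (E1 : Rabs (A / r) = X * / rho ^ 2).
        { unfold Rdiv. rewrite Rabs_mult, (Rabs_right (/ r)) by (left; apply Rinv_0_lt_compat; lra).
          rewrite Hr. unfold X. fold A. simpl. rewrite Rmult_1_r. reflexivity. }
        assert (E2 : Rabs (be / (r * r) * Wsum) <= Rabs be * E0 * / rho ^ 3).
        { unfold Rdiv. rewrite !Rabs_mult, (Rabs_right (/ (r * r))) by (left; apply Rinv_0_lt_compat; nra).
          pose proof (Rabs_pos be).
          assert (0 < / (r * r)) by (apply Rinv_0_lt_compat; nra).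
          apply Rle_trans with (Rabs be * / (r * r) * (rho * E0)).
          { apply Rmult_le_compat_l; [nra|auto]. }
          rewrite Hr. right. field. lra. }
        lra. }
      rewrite Rabs_mult, (Rabs_right (/ rho ^ sn)) by (left; apply Rinv_0_lt_compat; auto).
      assert (0 < / rho ^ sn) by (apply Rinv_0_lt_compat; auto).
      apply Rle_trans with (/ rho ^ sn * (X * / rho ^ 2 + (Rabs be * E0 + T0) * / rho ^ 3)).
      { apply Rmult_le_compat_l; lra. }
      replace (/ rho ^ sn * (X * / rho ^ 2 + (Rabs be * E0 + T0) * / rho ^ 3))
        with (X * / rho ^ (sn + 2) + (Rabs be * E0 + T0) * / rho ^ (sn + 3)).
      2:{ rewrite !pow_add. field. repeat split; try apply pow_nonzero; lra. }
      assert (0 <= Rabs be * E0 + T0) by (pose proof (Rabs_pos be); nra).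
      assert ((Rabs be * E0 + T0) * / rho ^ (sn + 3) <= (Rabs be * E0 + T0) * / rho ^ Datatypes.S d)
        by (apply Rmult_le_compat_l; auto).
      unfold Zc. lra. }
    assert (Hrho1 : 1 <= rho) by lra.
    assert (Hq : 1 + n1 n <= (1 + INR d) * rho) by nra.
    assert (Hq2 : (1 + n1 n) ^ (S d) <= ((1 + INR d) * rho) ^ (S d)) by (apply pow_incr; lra).
    rewrite Rpow_mult_distr in Hq2.
    assert (0 < rho ^ (S d)) by (apply pow_lt; lra).
    assert (0 < (1 + n1 n) ^ (S d)) by (apply pow_lt; lra).
    assert (Zc * / rho ^ (S d) <= Zc * (1 + INR d) ^ (S d) * / (1 + n1 n) ^ (S d)).
    { rewrite Rmult_assoc. apply Rmult_le_compat_l; auto.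
      apply (Rmult_le_reg_r (rho ^ (S d))); auto.
      apply (Rmult_le_reg_r ((1 + n1 n) ^ (S d))); auto.
      replace (/ rho ^ S d * rho ^ S d * (1 + n1 n) ^ S d) with ((1 + n1 n) ^ S d) by (field; lra).
      replace ((1 + INR d) ^ S d * / (1 + n1 n) ^ S d * rho ^ S d * (1 + n1 n) ^ S d)
        with ((1 + INR d) ^ S d * rho ^ S d) by (field; lra). lra. }
    assert (0 <= G * (1 + INR d * rho0) ^ (S d) * / (1 + n1 n) ^ (S d)).
    { apply Rmult_le_pos; [|lra]. apply Rmult_le_pos; auto. apply pow_le; nra. }
    rewrite Rmult_plus_distr_r. lra.
Qed.

Lemma n1_nonneg n : 0 <= n1 n.
Proof. induction n; simpl; [lra|]. pose proof (Rabs_pos (IZR a)); lra. Qed.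
Lemma rsum_app {A} (l1 l2 : list A) f : rsum (l1 ++ l2) f = rsum l1 f + rsum l2 f.
Proof. induction l1; simpl; [ring|rewrite IHl1; ring]. Qed.

Lemma rsum_map {A B} (g : A -> B) l f : rsum (map g l) f = rsum l (fun x => f (g x)).
Proof. induction l; simpl; [ring|rewrite IHl; ring]. Qed.

Lemma rsum_flat_map {A B} (h : A -> list B) l f :
  rsum (flat_map h l) f = rsum l (fun x => rsum (h x) f).
Proof. induction l; simpl; [ring|rewrite rsum_app, IHl; ring]. Qed.

Lemma rsum_sub {A} (L B : list A) f :
  NoDup L -> (forall x, In x L -> In x B) -> (forall x, 0 <= f x) ->
  rsum L f <= rsum B f.
Proof.
  revert B. induction L as [|a L IH]; intros B HN Hin Hf.
  - simpl. apply rsum_nonneg; auto.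
  - inversion HN; subst.
    destruct (in_split a B (Hin a (or_introl eq_refl))) as [B1 [B2 ->]].
    rewrite rsum_app. simpl.
    assert (rsum L f <= rsum (B1 ++ B2) f).
    { apply IH; auto. intros x Hx.
      assert (Hx' := Hin x (or_intror Hx)).
      apply in_app_or in Hx'. apply in_or_app. destruct Hx' as [H|[H|H]]; auto.
      subst; contradiction. }
    rewrite rsum_app in H. lra.
Qed.

Fixpoint zrange (M : nat) : list Z :=
  match M with
  | O => [0%Z]
  | S m => (Z.of_nat (S m)) :: (- Z.of_nat (S m))%Z :: zrange m
  end.



Lemma zrange_in M x : (Z.abs x <= Z.of_nat M)%Z -> In x (zrange M).
Proof.
  induction M; intros H; simpl.
  - left; lia.
  - destruct (Z.eq_dec x (Z.of_nat (S M))) as [->|H1]; [auto|].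
    destruct (Z.eq_dec x (- Z.of_nat (S M))) as [->|H2]; [auto|].
    right; right; apply IHM; lia.
Qed.

Fixpoint box (d M : nat) : list pt :=
  match d with
  | O => [nil]
  | S d' => flat_map (fun x => map (cons x) (box d' M)) (zrange M)
  end.



Lemma box_in d M (n : pt) : length n = d -> (forall x, In x n -> (Z.abs x <= Z.of_nat M)%Z) ->
  In n (box d M).
Proof.
  revert d; induction n as [|x n IH]; intros d Hl H; simpl in Hl; subst; simpl.
  - auto.
  - apply in_flat_map. exists x; split.
    + apply zrange_in; apply H; left; auto.
    + apply in_map. apply IH; auto. intros; apply H; right; auto.
Qed.

Lemma zrange_sum (b : R) (p M : nat) : 1 <= b ->
  rsum (zrange M) (fun x => / (b + Rabs (IZR x)) ^ (S (S p))) <= 3 / b ^ (S p).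
Proof.
  intro Hb.
  assert (Hbp : 0 < b ^ p) by (apply pow_lt; lra).
  assert (Key : rsum (zrange M) (fun x => / (b + Rabs (IZR x)) ^ (S (S p)))
                <= / b ^ (S (S p)) + 2 / b ^ p * (/ b - / (b + INR M))).
  { induction M.
    - simpl. rewrite Rabs_R0, !Rplus_0_r. replace (/ b - / b) with 0 by ring. lra.
    - set (f := fun x => / (b + Rabs (IZR x)) ^ (S (S p))) in *.
      change (rsum (zrange (S M)) f) with (f (Z.of_nat (S M)) + (f (- Z.of_nat (S M))%Z + rsum (zrange M) f)).
      unfold f at 1 2.
      rewrite opp_IZR.
      rewrite Rabs_Ropp, <- INR_IZR_INZ, Rabs_right by (apply Rle_ge, pos_INR).
      rewrite S_INR.
      assert (HM := pos_INR M).
      set (y := b + INR M) in *.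
      assert (Hy : 1 <= y) by (unfold y; lra).
      replace (b + (INR M + 1)) with (y + 1) by (unfold y; ring).
      assert (Hby : b ^ p <= (y + 1) ^ p) by (apply pow_incr; unfold y; split; lra).
      assert (Hq : / (y + 1) ^ (S (S p)) <= / b ^ p * (/ y - / (y + 1))).
      { replace (/ y - / (y + 1)) with (/ (y * (y + 1))) by (field; lra).
        rewrite <- Rinv_mult.
        apply Rinv_le_contravar. { apply Rmult_lt_0_compat; [lra|]. nra. }
        simpl. assert (0 < (y+1)^p) by (apply pow_lt; lra).
        assert (b ^ p * (y * (y + 1)) <= (y+1)^p * (y * (y + 1))) by (apply Rmult_le_compat_r; nra).
        nra. }
      unfold Rdiv in *.
      assert (E : 2 * / b ^ p * (/ b - / (y + 1)) = 2 * / b ^ p * (/ b - / y) + 2 * (/ b ^ p * (/ y - / (y + 1)))) by ring.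
      lra. }
  eapply Rle_trans; [exact Key|].
  assert (0 < / (b + INR M)) by (apply Rinv_0_lt_compat; pose proof (pos_INR M); lra).
  assert (/ b ^ (S (S p)) <= / b ^ (S p)).
  { apply Rinv_le_contravar; [apply pow_lt; lra|]. simpl. 
    assert (0 < b * b^p) by (apply Rmult_lt_0_compat; lra). nra. }
  replace (2 / b ^ p * / b) with (2 / b ^ (S p)) in *.
  2:{ simpl. field. lra. }
  assert (0 < / b ^ p) by (apply Rinv_0_lt_compat; lra).
  unfold Rdiv in *. 
  assert (2 * / b ^ p * (/ b - / (b + INR M)) <= 2 * / b ^ (S p)).
  { replace (2 * / b ^ (S p)) with (2 * / b ^ p * / b) by (simpl; field; lra). nra. }
  lra.
Qed.

Lemma box_sum (M d : nat) : forall (p : nat) (b : R), 1 <= b ->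
  rsum (box d M) (fun n => / (b + n1 n) ^ (d + S p)) <= 3 ^ d / b ^ (S p).
Proof.
  induction d; intros p b Hb.
  - simpl. rewrite Rplus_0_r. unfold Rdiv. rewrite Rmult_1_l, Rplus_0_r. lra.
  - simpl box. rewrite rsum_flat_map.
    eapply Rle_trans.
    { apply rsum_le. intros x _. rewrite rsum_map.
      replace (S d + S p)%nat with (d + S (S p))%nat by lia.
      apply (rsum_le _ _ (fun n => / ((b + Rabs (IZR x)) + n1 n) ^ (d + S (S p)))).
      { intros n _. simpl n1. right. f_equal. f_equal. ring. } }
    eapply Rle_trans.
    { apply rsum_le. intros x _. apply IHd. pose proof (Rabs_pos (IZR x)); lra. }
    unfold Rdiv. rewrite rsum_scal.
    pose proof (zrange_sum b p M Hb).
    simpl (3 ^ S d).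
    assert (0 < 3 ^ d) by (apply pow_lt; lra).
    unfold Rdiv in H. nra.
Qed.
Fixpoint maxc (L : list pt) : nat :=
  match L with
  | nil => O
  | n :: L' => (fold_right (fun x a => Z.to_nat (Z.abs x) + a) O n + maxc L')%nat
  end.

Lemma maxc_in L n x : In n L -> In x n -> (Z.abs x <= Z.of_nat (maxc L))%Z.
Proof.
  induction L as [|m L IH]; simpl; [tauto|].
  intros [->|Hn] Hx.
  - assert (H : forall n : pt, In x n -> (Z.to_nat (Z.abs x) <= fold_right (fun x a => Z.to_nat (Z.abs x) + a) O n)%nat).
    { induction n0 as [|y n0 IHn]; simpl; [tauto|]. intros [->|Hy]; [lia|]. specialize (IHn Hy). lia. }
    specialize (H n Hx). lia.
  - specialize (IH Hn Hx). lia.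
Qed.

Theorem lemma2p9 (d : nat) (g : pt -> Z) (S : list pt) (s : Z) :
  (2 <= d)%nat ->
  is_support d g S ->
  condA g S -> condB d g S -> condC d g S -> condD d g S ->
  (Z.of_nat d - 2 <= s)%Z ->
  ell1 d (conv g S s).
Proof.
  intros Hd Hsup HA HB HC HD Hs.
  destruct (main_est d g S s Hd Hsup HA HB HC HD Hs) as [K [HK HKb]].
  exists (K * 3 ^ d). intros L HN HL.
  change (rsum L (fun n => Rabs (conv g S s n)) <= K * 3 ^ d).
  rewrite Forall_forall in HL.
  apply Rle_trans with (rsum L (fun n => K * / (1 + n1 n) ^ (d + 1))).
  { apply rsum_le. intros n Hn. rewrite Nat.add_1_r. apply HKb; auto. }
  apply Rle_trans with (rsum (box d (maxc L)) (fun n => K * / (1 + n1 n) ^ (d + 1))).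
  { apply rsum_sub; auto.
    - intros n Hn. apply box_in; auto. intros x Hx. apply (maxc_in L n x); auto.
    - intros n. apply Rmult_le_pos; auto. left; apply Rinv_0_lt_compat, pow_lt.
      pose proof (n1_nonneg n); lra. }
  rewrite rsum_scal. apply Rmult_le_compat_l; auto.
  assert (H := box_sum (maxc L) d 0 1 ltac:(lra)).
  replace (1 ^ 1) with 1 in H by ring. lra.
Qed.
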